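(* Let $n$ be a positive integer and let $c\geq 2$ be an integer whose smallest prime factor $p_1$ satisfies $p_1>(n+1)^2/4$. Then there is no arithmetical structure $(r_1,\dots,r_n)$ on $K_n$ with $r_1=c$.
   Context: An arithmetical structure on the complete graph $K_n$ is an $n$-tuple $(r_1,r_2,\dots,r_n)$ of positive integers with $\gcd(r_1,\dots,r_n)=1$ such that $r_j$ divides $\sum_{i=1}^n r_i$ for every $j$. The entries are always listed so that $r_1\geq r_2\geq\dots\geq r_n$; thus $r_1$ is the largest value of the structure. *)

(* Defs.v *)
From mathcomp Require Import all_boot.
Set Implicit Arguments. Unset Strict Implicit. Unset Printing Implicit Defensive.

Definition arith_structure_Kn (n : nat) (r : seq nat) : Prop :=
  [/\ size r = n,
      all (fun x => 0 < x) r,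
      sorted geq r,
      foldr gcdn 0 r = 1
    & all (fun x => x %| sumn r) r].

(* Main.v *)
Require Import Defs.
From mathcomp Require Import all_boot.
From mathcomp Require Import zify.

Lemma elem_bound (c K x : nat) : 0 < K -> 0 < c -> 0 < x -> x <= c -> x %| K * c ->
  x = c \/ pdiv c * x <= K * c.
Proof.
move=> K0 c0 x0 xc /dvdnP [d Hd].
case: (leqP (pdiv c) d) => hd.
  right; rewrite Hd; exact: leq_mul.
left.
have cop : coprime c d.
  rewrite /coprime; apply/eqP.
  have g0 : 0 < gcdn c d by rewrite gcdn_gt0 c0.
  case: (ltnP 1 (gcdn c d)) => g1; last by lia.
  have := pdiv_min_dvd g1 (dvdn_gcdl c d).
  have : gcdn c d <= d.
    case: d Hd hd g1 g0 => [|d] Hd hd g1 g0; first by rewrite mul0n in Hd; have := muln_gt0 K c; rewrite Hd K0 c0.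
    exact: dvdn_leq (ltn0Sn d) (dvdn_gcdr c d.+1).
  lia.
have : c %| d * x by rewrite -Hd dvdn_mull.
rewrite Gauss_dvdr // => /dvdn_leq -/(_ x0); lia.
Qed.

Lemma count_split (c p K : nat) (s : seq nat) :
  all (fun x => (x == c) || ((0 < x) && (p * x <= K))) s ->
  exists T, sumn s = (size s - count (fun x => x != c) s) * c + T /\
    p * T <= count (fun x => x != c) s * K /\ count (fun x => x != c) s <= T /\
    count (fun x => x != c) s <= size s.
Proof.
elim: s => [|x s IH] /=; first by exists 0; lia.
case/andP => hx /IH [T [h1 [h2 [h3 h4]]]].
move: h1 h2 h3 h4; set m := count _ s => h1 h2 h3 h4.
case: (eqVneq x c) => [->|nx] /=.
  exists T; rewrite /= ?eqxx /= add0n; split; last lia.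
  rewrite h1 subSn //; lia.
rewrite (negbTE nx) /= in hx; case/andP: hx => hx0 hxp.
exists (x + T); rewrite add1n; split; first by rewrite h1; lia.
split; last lia.
rewrite mulnDr mulSn; lia.
Qed.

Lemma all_c_gcd (c : nat) (s : seq nat) :
  count (fun x => x != c) s = 0 -> c %| foldr gcdn 0 s.
Proof.
elim: s => [|x s IH] //=.
case: (eqVneq x c) => [->|] //= h.
by rewrite dvdn_gcd dvdnn IH.
Qed.

Lemma amgm (m q : nat) : 4 * m * (q + 1) <= (m + q).+1 ^ 2.
Proof.
rewrite -mulnn.
case: (leqP m (q+1)) => h.
  have [d hd] : exists d, q + 1 = m + d by exists (q + 1 - m); lia.
  have hd2 : (m + q).+1 = m + m + d by lia.
  rewrite hd hd2; have := leq0n (d * d); nia.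
have [d hd] : exists d, m = q + 1 + d by exists (m - (q + 1)); lia.
have hd2 : (m + q).+1 = q + 1 + (q + 1) + d by lia.
rewrite hd2 hd; have := leq0n (d * d); nia.
Qed.

Lemma fin_arith (p s m q : nat) : 1 <= s -> p * s <= m * (s + q) ->
  (m + q).+1 ^ 2 < 4 * p -> False.
Proof.
move=> s1 h hp.
have e1 := amgm m q.
have e2 : 4 * m * (s + q) <= (m + q).+1 ^ 2 * s.
  apply: leq_trans (_ : 4 * m * (q + 1) * s <= _); last by rewrite leq_mul2r e1 orbT.
  have hq : s + q <= (q + 1) * s by nia.
  rewrite -[4 * m * (q + 1) * s]mulnA leq_mul2l hq orbT //.
have e3 : (m + q).+1 ^ 2 * s < 4 * p * s by rewrite ltn_pmul2r.
have : 4 * (p * s) <= 4 * (m * (s + q)) by rewrite leq_mul2l h orbT.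
rewrite !mulnA; lia.
Qed.

Theorem theorem3p1 (n c : nat) :
  0 < n -> 2 <= c -> (n.+1) ^ 2 < 4 * pdiv c ->
  ~ (exists r : seq nat, arith_structure_Kn n r /\ head 0 r = c).
Proof.
move=> n0 c2 hp [r [[hsz hpos hsort hgcd hdiv] hh]].
case: r hsz hpos hsort hgcd hdiv hh => [|x t] hsz hpos hsort hgcd hdiv hh.
  by rewrite -hsz in n0.
rewrite /= in hh; subst x.
have hle : all (fun y => y <= c) (c :: t).
  rewrite /= leqnn /=.
  by apply: (order_path_min _ hsort) => a b d h1 h2; apply: leq_trans h2 h1.
have : c %| sumn (c :: t) by move: hdiv => /= /andP [].
case/dvdnP => k Hk.
set r := c :: t in hsz hpos hsort hgcd hdiv hle Hk.
have hall : all (fun x => (x == c) || ((0 < x) && (pdiv c * x <= k * c))) r.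
  apply/allP => x xr.
  have x0 : 0 < x by move/allP: hpos => /(_ x xr).
  have xc : x <= c by move/allP: hle => /(_ x xr).
  have xd : x %| k * c by rewrite -Hk; move/allP: hdiv => /(_ x xr).
  have k0 : 0 < k.
    case: (posnP k) => // k0; move: Hk; rewrite k0 /= => /eqP; rewrite addn_eq0; lia.
  case: (@elem_bound c k x k0 (ltnW c2) x0 xc xd) => [->|h]; first by rewrite eqxx.
  by rewrite x0 h orbT.
have [T [h1 [h2 [h3 h4]]]] := @count_split _ _ _ _ hall.
set m := count _ _ in h1 h2 h3 h4.
have m1 : 1 <= m.
  case: (posnP m) => // m0.
  have := @all_c_gcd c r m0; rewrite hgcd dvdn1; lia.
rewrite hsz in h1 h4.
set p := pdiv c in hp h2.
have kge : n - m <= k.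
  have : (n - m) * c <= k * c by lia.
  by rewrite leq_pmul2r //; lia.
have hT : T = (k - (n - m)) * c by rewrite mulnBl; lia.
have hs : p * (k - (n - m)) <= m * k.
  have : p * (k - (n - m)) * c <= m * k * c by rewrite -mulnA -hT -mulnA.
  by rewrite leq_pmul2r //; lia.
have s1 : 1 <= k - (n - m).
  case: (posnP (k - (n - m))) => // s0; rewrite hT s0 in h3; lia.
set s := k - (n - m) in hs s1.
have ek : k = s + (n - m) by rewrite /s; lia.
rewrite ek in hs.
have en : n = m + (n - m) by lia.
rewrite en in hp.
exact: (@fin_arith p s m (n - m) s1 hs hp).
Qed.
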